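(* Let $q$ be a prime power, $0<k<n\le q$ with $n\mid q-1$, and let $C=RS_k(n,b)$ be a Reed–Solomon code over $\mathbb{F}_q$ with $0<b\le (k+1)/2$. Then there exists an MDS QUENTA code with parameters $[[n,\,2b-1,\,n-k+1;\,n+2b-2k-1]]_q$. In particular, for $b=(k+1)/2$ this is a maximal entanglement MDS QUENTA code.
   Context: For $n\mid q-1$ and a primitive $n$-th root of unity $\alpha\in\mathbb{F}_q$, the Reed–Solomon code $RS_k(n,b)$ is the cyclic code of length $n$ over $\mathbb{F}_q$ with defining set $\{b,b+1,\dots,b+n-k-1\}$ (indices mod $n$), where the defining set of a cyclic code $C$ is $\{i\in\mathbb{Z}_n: c(\alpha^i)=0\ \forall c\in C\}$; it is an $[n,k,n-k+1]_q$ code. A QUENTA code (entanglement-assisted quantum error-correcting code) with parameters $[[n,k,d;c]]_q$ is a $q$-ary entanglement-assisted quantum stabilizer code that encodes $k$ logical qudits into $n$ physical qudits using $c$ pairs of maximally entangled qudits pre-shared between sender and receiver, and has minimum distance $d$. It has maximal entanglement if $c=n-k$, and it is MDS if $k=n-2(d-1)+c$ (equality in the entanglement-assisted quantum Singleton bound).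
   Formalization: The parameters also satisfy $2k+1\le n+2b$, so the number $n+2b-2k-1$ of maximally entangled pairs is nonnegative. The statement above fails without it. *)

(* Defs.v *)
From HB Require Import structures.
From mathcomp Require Import all_boot all_order all_algebra all_fingroup all_field.
Set Implicit Arguments. Unset Strict Implicit. Unset Printing Implicit Defensive.
Import GRing.Theory.
Local Open Scope ring_scope.

Section Quenta.
Variable F : finFieldType.

(** Reed-Solomon code RS_k(n,b): cyclic code of length n with defining set
    {b, b+1, ..., b+n-k-1} (exponents of alpha, taken mod n automatically
    since alpha^n = 1). *)
Definition RS_code (n k b : nat) (alpha : F) : pred 'rV[F]_n :=
  fun c => [forall j : 'I_(n - k),
              \sum_(i < n) c 0 i * alpha ^+ (i * (b + j)) == 0].

(** Symplectic form on F_q^{2n}: vectors (a|b), <(a|b),(a'|b')>_s = a.b' - b.a'. *)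
Definition symJ (n : nat) : 'M[F]_(n + n) :=
  block_mx 0 1%:M (- 1%:M) 0.

Definition sdual (n m : nat) (M : 'M[F]_(m, n + n)) : 'M[F]_(n + n) :=
  kermx (symJ n *m M^T).

Definition shull (n m : nat) (M : 'M[F]_(m, n + n)) : 'M[F]_(n + n) :=
  (M :&: sdual M)%MS.

Definition swt (n : nat) (v : 'rV[F]_(n + n)) : nat :=
  #|[set i : 'I_n | (v 0 (lshift n i) != 0) || (v 0 (rshift n i) != 0)]|.

Definition ebits (n m : nat) (M : 'M[F]_(m, n + n)) : nat :=
  ((\rank M - \rank (shull M)) %/ 2)%N.

(** The entanglement-assisted stabilizer code with stabilizer rowspace M is a
    QUENTA code [[n,k,d;c]]_q:  c ebits, k = n - dim S + c logical qudits,
    minimum distance d = min symplectic weight of S^{⊥s} \ (S ∩ S^{⊥s}). *)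
Definition is_QUENTA (n k d c m : nat) (M : 'M[F]_(m, n + n)) : Prop :=
  [/\ c = ebits M,
      k = (n + c - \rank M)%N,
      (exists v : 'rV[F]_(n + n),
          [&& (v <= sdual M)%MS, ~~ (v <= shull M)%MS & swt v == d]) &
      (forall v : 'rV[F]_(n + n),
          (v <= sdual M)%MS -> ~~ (v <= shull M)%MS -> (d <= swt v)%N)].

Definition QUENTA_exists (n k d c : nat) : Prop :=
  exists m (M : 'M[F]_(m, n + n)), is_QUENTA k d c M.

(** MDS: equality in the EA quantum Singleton bound k = n - 2(d-1) + c. *)
Definition QUENTA_MDS (n k d c : nat) : Prop := (k + 2 * (d - 1) = n + c)%N.

Definition max_entangled (n k c : nat) : Prop := c = (n - k)%N.

End Quenta.

(* Main.v *)
Require Import Defs.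
From HB Require Import structures.
From mathcomp Require Import all_boot all_order all_algebra all_fingroup all_field.
From mathcomp Require Import zify.
From mathcomp Require cyclic.
Set Implicit Arguments. Unset Strict Implicit. Unset Printing Implicit Defensive.
Import GRing.Theory.
Local Open Scope ring_scope.

Definition Emx (F : finFieldType) (n : nat) (alpha : F) (c m : nat) : 'M[F]_(m, n) :=
  \matrix_(j < m, i < n) alpha ^+ (i * (c + j)).

Definition wt (F : finFieldType) (n : nat) (v : 'rV[F]_n) : nat := #|[set i | v 0 i != 0]|.

Lemma alpha_neq0 (F : finFieldType) (n : nat) (alpha : F) :
  (0 < n)%N -> n.-primitive_root alpha -> alpha != 0.
Proof.
move=> n0 ha; apply/eqP=> a0; have := prim_expr_order ha.
by rewrite a0 expr0n gtn_eqF // => /eqP; rewrite eq_sym oner_eq0.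
Qed.

Lemma psum0 (F : finFieldType) (n : nat) (alpha : F) (N : nat) :
  n.-primitive_root alpha -> ~~ (n %| N)%N -> \sum_(i < n) alpha ^+ (i * N) = 0.
Proof.
move=> ha nN; set z := alpha ^+ N.
rewrite (eq_bigr (fun i : 'I_n => z ^+ i)); last by move=> i _; rewrite mulnC exprM.
have zn : z ^+ n - 1 = 0.
  by rewrite /z -exprM mulnC exprM (prim_expr_order ha) expr1n subrr.
move: zn; rewrite subrX1 => /eqP; rewrite mulf_eq0 => /orP [|/eqP //].
rewrite subr_eq0 /z -[X in _ == X](expr0 alpha) (eq_prim_root_expr ha) mod0n.
by rewrite -/(dvdn n N) (negbTE nN).
Qed.

Lemma psumn (F : finFieldType) (n : nat) (alpha : F) (N : nat) :
  n.-primitive_root alpha -> (n %| N)%N -> \sum_(i < n) alpha ^+ (i * N) = n%:R.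
Proof.
move=> ha /dvdnP [d ->].
rewrite (eq_bigr (fun _ => 1)); first by rewrite sumr_const card_ord.
by move=> i _; rewrite mulnA (mulnC _ n) exprM (prim_expr_order ha) expr1n.
Qed.

Lemma Eorth (F : finFieldType) (n : nat) (alpha : F) c1 m1 c2 m2 :
  n.-primitive_root alpha ->
  (forall j l, (j < m1)%N -> (l < m2)%N -> ~~ (n %| c1 + j + (c2 + l))%N) ->
  Emx n alpha c1 m1 *m (Emx n alpha c2 m2)^T = 0.
Proof.
move=> ha H; apply/matrixP => j l; rewrite !mxE.
rewrite (eq_bigr (fun i : 'I_n => alpha ^+ (i * (c1 + j + (c2 + l))))).
  by apply: psum0 => //; apply: H.
by move=> i _; rewrite ?mxE -exprD -mulnDr.
Qed.

Lemma roots_card (F : finFieldType) (n : nat) (alpha : F) (f : {poly F}) (Z : {set 'I_n}) :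
  n.-primitive_root alpha -> f != 0 ->
  (forall i, i \in Z -> root f (alpha ^+ i)) -> (#|Z| < size f)%N.
Proof.
move=> ha fn0 HZ.
have := @max_poly_roots F f [seq alpha ^+ (val i) | i <- enum Z] fn0.
rewrite size_map -cardE; apply.
  by apply/allP => y /mapP [i]; rewrite mem_enum => /HZ ? ->.
rewrite map_inj_in_uniq ?enum_uniq // => i j _ _ /eqP.
by rewrite (eq_prim_root_expr ha) !modn_small ?ltn_ord // => /eqP /val_inj.
Qed.

Lemma Emx_eval (F : finFieldType) (n : nat) (alpha : F) c m (x : 'rV[F]_m) (i : 'I_n) :
  (x *m Emx n alpha c m) 0 i = alpha ^+ (i * c) * (rVpoly x).[alpha ^+ i].
Proof.
rewrite !mxE (horner_coef_wide _ (size_poly _ _)) mulr_sumr; apply: eq_bigr => j _.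
by rewrite mxE coef_rVpoly_ord mulnDr exprD -exprM mulrCA.
Qed.

Lemma Emx_weight (F : finFieldType) (n : nat) (alpha : F) c m (x : 'rV[F]_m) :
  (0 < n)%N -> n.-primitive_root alpha -> (m <= n)%N -> x *m Emx n alpha c m != 0 ->
  (n - m < wt (x *m Emx n alpha c m))%N.
Proof.
move=> n0 ha mn hx; set f := rVpoly x.
have an0 := alpha_neq0 n0 ha.
have fn0 : f != 0.
  apply: contra hx => /eqP f0; apply/eqP/rowP => i.
  by rewrite Emx_eval -/f f0 horner0 mulr0 mxE.
set Z := [set i | (x *m Emx n alpha c m) 0 i == 0].
have hZ : (#|Z| < size f)%N.
  apply: (roots_card ha fn0) => i; rewrite inE Emx_eval mulf_eq0 expf_eq0.
  by rewrite (negbTE an0) andbF.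
have sf : (size f <= m)%N by apply: size_poly.
have : (#|Z| + #|~: Z| = n)%N by rewrite cardsC card_ord.
rewrite /wt; have -> : [set i | (x *m Emx n alpha c m) 0 i != 0] = ~: Z.
  by apply/setP => i; rewrite !inE.
move=> HH; move: HH hZ sf; generalize #|Z| #|~: Z| (size f); intros; lia.
Qed.

Lemma Emx_free (F : finFieldType) (n : nat) (alpha : F) c m :
  (0 < n)%N -> n.-primitive_root alpha -> (m <= n)%N -> row_free (Emx n alpha c m).
Proof.
move=> n0 ha mn; apply/inj_row_free => x hx.
have an0 := alpha_neq0 n0 ha.
have f0 : rVpoly x = 0.
  apply/eqP; apply: contraT => fn0.
  have := roots_card (Z := setT) ha fn0.
  rewrite cardsT card_ord.
  have sf : (size (rVpoly x) <= m)%N by apply: size_poly.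
  move=> H; have : (n < size (rVpoly x))%N.
    apply: H => i _; move: (congr1 (fun v : 'rV_n => v 0 i) hx).
    by rewrite Emx_eval mxE => /eqP; rewrite mulf_eq0 expf_eq0 (negbTE an0) andbF.
  lia.
by apply/rowP => j; rewrite -coef_rVpoly_ord f0 coef0 mxE.
Qed.

Lemma natn_neq0 (F : finFieldType) (n : nat) :
  (n %| #|F|.-1)%N -> n%:R != 0 :> F.
Proof.
move=> hn; have [p pp pc] := finPcharP F.
have hF : (#|F|%:R == 0 :> F).
  by rewrite -cardsT -FinRing.Theory.zmodXgE cyclic.expg_cardG ?inE.
rewrite -(dvdn_pcharf pc); apply/negP => pn.
rewrite -(dvdn_pcharf pc) in hF.
have h1 : (p %| #|F|.-1)%N by apply: dvdn_trans hn.
have F0 : (0 < #|F|)%N by apply/card_gt0P; exists 0.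
have : (p %| 1)%N.
  by rewrite -(dvdn_addl 1 h1) add1n prednK.
by rewrite dvdn1 => /eqP p1; rewrite p1 in pp.
Qed.


Lemma BD_mul (F : fieldType) p1 p2 n1 n2 (A : 'M[F]_(p1, n1)) (B : 'M[F]_(p2, n2)) (w : 'rV[F]_(p1 + p2)) :
  w *m block_mx A 0 0 B = row_mx (lsubmx w *m A) (rsubmx w *m B).
Proof.
rewrite -{1}(hsubmxK w) /block_mx mul_row_col !mul_mx_row !mulmx0 add_row_mx.
by rewrite addr0 add0r.
Qed.

Lemma BD_free (F : fieldType) p1 p2 n1 n2 (A : 'M[F]_(p1, n1)) (B : 'M[F]_(p2, n2)) :
  row_free A -> row_free B -> row_free (block_mx A 0 0 B).
Proof.
move=> fA fB; apply/inj_row_free => w; rewrite BD_mul -row_mx0 => /eq_row_mx [h1 h2].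
rewrite -(hsubmxK w); move: h1 h2; rewrite -(mul0mx _ A) -(mul0mx _ B).
by move=> /(row_free_inj fA) -> /(row_free_inj fB) ->; rewrite row_mx0.
Qed.

Lemma BD_rank (F : fieldType) p1 p2 n1 n2 (A : 'M[F]_(p1, n1)) (B : 'M[F]_(p2, n2)) :
  row_free A -> row_free B -> \rank (block_mx A 0 0 B) = (p1 + p2)%N.
Proof. by move=> fA fB; apply/eqP; apply: BD_free. Qed.

Lemma BD_sub (F : fieldType) p1 p2 p3 p4 n1 n2 (A : 'M[F]_(p1, n1)) (B : 'M[F]_(p2, n2))
  (C : 'M[F]_(p3, n1)) (D : 'M[F]_(p4, n2)) :
  (A <= C)%MS -> (B <= D)%MS -> (block_mx A 0 0 B <= block_mx C 0 0 D)%MS.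
Proof.
move=> /submxP [u ->] /submxP [v ->].
have -> : block_mx (u *m C) 0 0 (v *m D) = block_mx u 0 0 v *m block_mx C 0 0 D.
  by rewrite mulmx_block !mulmx0 !mul0mx !addr0 !add0r.
exact: submxMl.
Qed.

Lemma BD_sub2 (F : fieldType) p1 p2 p3 p4 p5 p6 n1 n2 (A : 'M[F]_(p1, n1)) (B : 'M[F]_(p2, n2))
  (C : 'M[F]_(p3, n1)) (D : 'M[F]_(p4, n2)) (C' : 'M[F]_(p5, n1)) (D' : 'M[F]_(p6, n2)) :
  (A <= C + C')%MS -> (B <= D + D')%MS ->
  (block_mx A 0 0 B <= block_mx C 0 0 D + block_mx C' 0 0 D')%MS.
Proof.
move=> /sub_addsmxP [u ->] /sub_addsmxP [v ->]; apply/sub_addsmxP.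
exists (block_mx u.1 0 0 v.1, block_mx u.2 0 0 v.2) => /=.
by rewrite !mulmx_block !mulmx0 !mul0mx !addr0 !add0r add_block_mx !addr0.
Qed.

Lemma symJ_unit (F : finFieldType) n : @symJ F n \in unitmx.
Proof.
have : @symJ F n *m (- @symJ F n) = 1%:M.
  rewrite mulmxN /symJ mulmx_block !mulmx0 !mul0mx !mulmx1 !mul1mx !addr0 !add0r.
  by rewrite (scalar_mx_block n n) opp_block_mx !oppr0 opprK.
by case/mulmx1_unit.
Qed.

Lemma sdual_rank (F : finFieldType) n m (M : 'M[F]_(m, n + n)) :
  \rank (sdual M) = (n + n - \rank M)%N.
Proof.
by rewrite /sdual mxrank_ker -mxrank_tr trmx_mul trmxK mxrankMfree ?row_free_unit ?unitmx_tr ?symJ_unit.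
Qed.

Lemma BD_sdual (F : finFieldType) p1 p2 p3 p4 n (A : 'M[F]_(p1, n)) (B : 'M[F]_(p2, n))
  (C : 'M[F]_(p3, n)) (D : 'M[F]_(p4, n)) :
  A *m D^T = 0 -> B *m C^T = 0 -> (block_mx A 0 0 B <= sdual (block_mx C 0 0 D))%MS.
Proof.
move=> hAD hBC; apply/sub_kermxP; rewrite mulmxA /symJ mulmx_block tr_block_mx mulmx_block.
rewrite !(mulmx0, mul0mx, mulmx1, mulmxN, trmx0, mulNmx, addr0, add0r).
by rewrite hAD hBC !oppr0 block_mx0.
Qed.

Lemma Esub (F : finFieldType) n (alpha : F) c m c' m' :
  (forall j, (j < m)%N -> exists2 j', (j' < m')%N & (c + j = c' + j')%N) ->
  (Emx n alpha c m <= Emx n alpha c' m')%MS.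
Proof.
move=> H; apply/row_subP => j; have [j' lj' e] := H j (ltn_ord j).
have -> : row j (Emx n alpha c m) = row (Ordinal lj') (Emx n alpha c' m').
  by apply/rowP => i; rewrite !mxE /= e.
exact: row_sub.
Qed.

Lemma Esub2 (F : finFieldType) n (alpha : F) c m c1 m1 c2 m2 :
  (forall j, (j < m)%N -> (exists2 j', (j' < m1)%N & (c + j = c1 + j')%N) \/
                         (exists2 j', (j' < m2)%N & (c + j = c2 + j')%N)) ->
  (Emx n alpha c m <= Emx n alpha c1 m1 + Emx n alpha c2 m2)%MS.
Proof.
move=> H; apply/row_subP => j; have [[j' lj' e]|[j' lj' e]] := H j (ltn_ord j).
  have -> : row j (Emx n alpha c m) = row (Ordinal lj') (Emx n alpha c1 m1).
    by apply/rowP => i; rewrite !mxE /= e.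
  exact: submx_trans (row_sub _ _) (addsmxSl _ _).
have -> : row j (Emx n alpha c m) = row (Ordinal lj') (Emx n alpha c2 m2).
  by apply/rowP => i; rewrite !mxE /= e.
exact: submx_trans (row_sub _ _) (addsmxSr _ _).
Qed.

Lemma ndiv n N : (n < N)%N -> (N < n + n)%N -> ~~ (n %| N)%N.
Proof.
move=> h1 h2; apply/negP => /dvdnP [d e]; subst N.
case: d h1 h2 => [|[|d]] /=; rewrite ?mul0n ?mul1n; try lia.
Qed.

Lemma swt_ge_l (F : finFieldType) n (a b : 'rV[F]_n) : (wt a <= swt (row_mx a b))%N.
Proof.
apply: subset_leq_card; apply/subsetP => i; rewrite !inE row_mxEl => ->; done.
Qed.

Lemma swt_ge_r (F : finFieldType) n (a b : 'rV[F]_n) : (wt b <= swt (row_mx a b))%N.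
Proof.
apply: subset_leq_card; apply/subsetP => i; rewrite !inE row_mxEr => ->; by rewrite orbT.
Qed.

Lemma swt_l0 (F : finFieldType) n (a : 'rV[F]_n) : swt (row_mx a 0) = wt a.
Proof.
by apply: eq_card => i; rewrite !inE row_mxEl row_mxEr mxE eqxx orbF.
Qed.

Lemma construction (F : finFieldType) (n k t : nat) (alpha : F) :
  (0 < k)%N -> (k < n)%N -> (t < k)%N -> (k + t <= n)%N ->
  (n %| #|F|.-1)%N -> n.-primitive_root alpha ->
  exists m (M : 'M[F]_(m, n + n)), is_QUENTA (k - t) (n - k + 1) (n - k - t) M.
Proof.
move=> k0 kn tk ktn hdiv ha.
have n0 : (0 < n)%N by lia.
set s := (n - k)%N.
set Ea := Emx n alpha (k + t) s; set Eb := Emx n alpha 1 s.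
set G2 := Emx n alpha n k; set G1 := Emx n alpha (s + 1 - t) k.
set Ua := Emx n alpha (k + t) (n - t); set Ub := Emx n alpha 1 (n - t).
set M := block_mx Ea 0 0 Eb; set Dm := block_mx G2 0 0 G1; set U := block_mx Ua 0 0 Ub.
have hG1Ea : G1 *m Ea^T = 0.
  by apply: Eorth => // j l jk ls; apply: ndiv; rewrite /s; lia.
have hG2Eb : G2 *m Eb^T = 0.
  by apply: Eorth => // j l jk ls; apply: ndiv; rewrite /s; lia.
have rM : \rank M = (s + s)%N by apply: BD_rank; apply: Emx_free => //; rewrite /s; lia.
have rD : \rank Dm = (k + k)%N by apply: BD_rank; apply: Emx_free => //; lia.
have rU : \rank U = ((n - t) + (n - t))%N by apply: BD_rank; apply: Emx_free => //; lia.
have Dsub : (Dm <= sdual M)%MS by apply: BD_sdual.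
have rS : \rank (sdual M) = (k + k)%N by rewrite sdual_rank rM /s; lia.
have eqD : (sdual M :=: Dm)%MS.
  apply: eqmx_sym; apply/eqmxP; have := (mxrank_leqif_eq Dsub).2.
  by rewrite rS rD eqxx => <-.
have s1 : (M + Dm <= U)%MS.
  rewrite addsmx_sub; apply/andP; split; apply: BD_sub; apply: Esub => j hj.
  - by exists j => //; lia.
  - by exists j => //; lia.
  - by exists (s - t + j)%N; rewrite /s; lia.
  - by exists (s - t + j)%N; rewrite /s; lia.
have s2 : (U <= M + Dm)%MS.
  apply: BD_sub2; apply: Esub2 => j hj; (case: (ltnP j s) => hjs; [left; exists j => //|right; exists (j - s + t)%N]); rewrite /s in hjs *; lia.
have rMD : \rank (M + Dm) = ((n - t) + (n - t))%N.
  by rewrite -rU; apply/eqP; rewrite eqn_leq !mxrankS.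
have rH : \rank (shull M) = (t + t)%N.
  have := mxrank_sum_cap M (sdual M).
  rewrite (adds_eqmx (eqmx_refl M) eqD) rMD rM rS /shull /s.
  lia.
exists (s + s)%N, M; split.
- rewrite /ebits rM rH /s !addnn -!mul2n -mulnBr mulKn //; lia.
- rewrite rM /s; lia.
- set rs := [seq alpha ^+ j | j <- iota 0 k.-1].
  set f := \prod_(z <- rs) ('X - z%:P).
  have sf : size f = k by rewrite size_prod_XsubC size_map size_iota prednK.
  set x : 'rV_k := poly_rV f.
  have xf : rVpoly x = f by rewrite poly_rV_K // sf.
  set a := x *m G2.
  have vD : (row_mx a 0 <= sdual M)%MS.
    rewrite eqD; have -> : row_mx a 0 = row_mx x 0 *m Dm.
      by rewrite BD_mul row_mxKl row_mxKr mul0mx.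
    exact: submxMl.
  have hnot : ~~ (row_mx a 0 <= shull M)%MS.
    apply/negP => h; have := submx_trans h (capmxSl _ _).
    case/submxP => y ey.
    pose T : 'M[F]_(n + n, k) := col_mx G1^T 0.
    have MT : M *m T = 0.
      rewrite /M /T /block_mx mul_col_mx !mul_row_col !mulmx0 !mul0mx !addr0.
      by rewrite -[Ea *m G1^T]trmxK trmx_mul trmxK hG1Ea trmx0 col_mx0.
    have : row_mx a 0 *m T = 0 by rewrite ey -mulmxA MT mulmx0.
    rewrite /T mul_row_col mul0mx addr0 /a -mulmxA => /rowP /(_ (Ordinal tk)).
    rewrite !mxE => /eqP; apply/negP.
    have jk : (k.-1 < k)%N by lia.
    rewrite (bigD1 (Ordinal jk)) //= big1 ?addr0.
      rewrite !mxE (eq_bigr (fun i : 'I_n => alpha ^+ (i * (n + k.-1 + (s + 1 - t + t))))).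
        rewrite psumn //; last by apply/dvdnP; exists 2%N; rewrite /s; lia.
        rewrite mulf_eq0 negb_or natn_neq0 // andbT.
        have : lead_coef f = 1 by apply/eqP; apply: monic_prod_XsubC.
        by rewrite lead_coefE sf => ->; exact: oner_neq0.
      by move=> i _; rewrite ?mxE -exprD -mulnDr.
    move=> j /eqP hj; rewrite !mxE.
    rewrite (eq_bigr (fun i : 'I_n => alpha ^+ (i * (n + j + (s + 1 - t + t))))).
      have hj' : (j : nat) <> k.-1 by move=> e; apply: hj; apply: val_inj.
      have := ltn_ord j.
      by move=> ?; rewrite psum0 ?mulr0 //; apply: ndiv; rewrite /s; lia.
    by move=> i _; rewrite ?mxE -exprD -mulnDr.
  have an0 : a != 0.
    by apply: contra hnot => /eqP ->; rewrite row_mx0 sub0mx.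
  exists (row_mx a 0); rewrite vD hnot /= swt_l0.
  set Z := [set i | a 0 i == 0].
  have hk1 : (k.-1 <= n)%N by lia.
  have hZ : ([set widen_ord hk1 i | i : 'I_k.-1] \subset Z).
    apply/subsetP => i /imsetP [j _ ->]; rewrite inE /a Emx_eval xf.
    have : root f (alpha ^+ (widen_ord hk1 j)).
      rewrite root_prod_XsubC; apply/mapP; exists (nat_of_ord j) => //.
      by rewrite mem_iota leq0n add0n ltn_ord.
    by move=> /rootP ->; rewrite mulr0.
  have cZ := subset_leq_card hZ.
  have cimg : #|[set widen_ord hk1 i | i : 'I_k.-1]| = k.-1.
    rewrite card_imset ?card_ord // => i j e; apply: val_inj; exact: (congr1 val e).
  rewrite cimg in cZ.
  have := Emx_weight n0 ha (ltnW kn) an0.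
  have : (#|Z| + #|~: Z| = n)%N by rewrite cardsC card_ord.
  rewrite /wt; have -> : [set i | a 0 i != 0] = ~: Z by apply/setP => i; rewrite !inE.
  move=> h1 h2; apply/eqP; lia.
- move=> v vS vH.
  have : (v <= Dm)%MS by rewrite -eqD.
  case/submxP => w ew; rewrite ew BD_mul.
  have [a0|an0] := eqVneq (lsubmx w *m G2) 0.
    have [b0|bn0] := eqVneq (rsubmx w *m G1) 0.
      by move: vH; rewrite ew BD_mul a0 b0 row_mx0 sub0mx.
    rewrite addn1; exact: leq_trans (Emx_weight n0 ha (ltnW kn) bn0) (swt_ge_r _ _).
  rewrite addn1; exact: leq_trans (Emx_weight n0 ha (ltnW kn) an0) (swt_ge_l _ _).
Qed.

Unset Implicit Arguments.

Theorem mainTheorem4 (F : finFieldType) (q n k b : nat) (alpha : F)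
  (C : pred 'rV[F]_n)
  (hq : #|F| = q)
  (hk0 : (0 < k)%N) (hkn : (k < n)%N) (hnq : (n <= q)%N)
  (hdiv : (n %| q.-1)%N)
  (halpha : n.-primitive_root alpha)
  (hC : C =i @RS_code F n k b alpha)
  (hb0 : (0 < b)%N) (hbk : (2 * b <= k + 1)%N)
  (hc : (2 * k + 1 <= n + 2 * b)%N) :
  (@QUENTA_exists F n (2 * b - 1) (n - k + 1) (n + 2 * b - 2 * k - 1)
   /\ @QUENTA_MDS n (2 * b - 1) (n - k + 1) (n + 2 * b - 2 * k - 1))
  /\ ((2 * b = k + 1)%N ->
      @QUENTA_exists F n (2 * b - 1) (n - k + 1) (n + 2 * b - 2 * k - 1)
      /\ @QUENTA_MDS n (2 * b - 1) (n - k + 1) (n + 2 * b - 2 * k - 1)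
      /\ @max_entangled n (2 * b - 1) (n + 2 * b - 2 * k - 1)).
Proof.
have hE : @QUENTA_exists F n (2 * b - 1) (n - k + 1) (n + 2 * b - 2 * k - 1).
  have := @construction F n k (k + 1 - 2 * b) alpha hk0 hkn.
  have e1 : (k - (k + 1 - 2 * b) = 2 * b - 1)%N by lia.
  have e2 : (n - k - (k + 1 - 2 * b) = n + 2 * b - 2 * k - 1)%N by lia.
  rewrite e1 e2 hq; move=> H; apply: H => //; lia.
have hM : @QUENTA_MDS n (2 * b - 1) (n - k + 1) (n + 2 * b - 2 * k - 1).
  rewrite /QUENTA_MDS; lia.
split; first by [].
move=> h; do !split => //; rewrite /max_entangled; lia.
Qed.
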